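(* Let $\varepsilon>0$, $\Omega\subset\mathbb{R}^2$ bounded open, $u\in\mathcal{SF}_\varepsilon(\Omega)$ and $R\in\mathcal{R}_\varepsilon(u)$, and assume $u(\mathcal{L}_\varepsilon(R))$ contains four points. If $i,j\in\mathcal{L}_\varepsilon$ are such that $[i,j]\subset R$ is an edge of $\mathcal{E}_\varepsilon$ and $u(i)\notin\{u(j),-u(j)\}$, then $[i,j]$ is a boundary edge of $R$.
   Context: $\mathcal{L}=\{ae_1+b\hat e_2:a,b\in\mathbb{Z}\}$ with $e_1=(1,0)$, $\hat e_2=\frac12(1,\sqrt3)$, $\mathcal{L}_\varepsilon=\varepsilon\mathcal{L}$, $\mathcal{L}_\varepsilon(R)=\mathcal{L}_\varepsilon\cap R$; $\mathcal{T}_\varepsilon$ is the set of closed triangles with vertices in $\mathcal{L}_\varepsilon$ pairwise at distance $\varepsilon$; $\mathcal{E}_\varepsilon$ the set of segments $[i,j]$, $i,j\in\mathcal{L}_\varepsilon$, $|i-j|=\varepsilon$. $n=(0,0,1)$; $\mathcal{SF}_\varepsilon(\Omega)$ is the set of $u:\mathcal{L}_\varepsilon\to\mathbb{S}^2$ with $u=n$ on $\mathcal{L}_\varepsilon\setminus\Omega$. $\mathcal{N}_\varepsilon(u)=\{[i,j]\in\mathcal{E}_\varepsilon:u(i)=-u(j)\}$, $\mathcal{C}_\varepsilon(u)=\mathcal{E}_\varepsilon\setminus\mathcal{N}_\varepsilon(u)$. Two triangles of $\mathcal{T}_\varepsilon$ are neighbours if their intersection is an edge in $\mathcal{N}_\varepsilon(u)$,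 and connected if joined by a finite chain of consecutive neighbours. $\mathcal{R}_\varepsilon(u)$ is the set of admissible interpolation regions: unions of pairwise connected triangles of $\mathcal{T}_\varepsilon$ that are maximal with respect to inclusion. A boundary edge of $R$ is an edge $[i,j]\in\mathcal{C}_\varepsilon(u)$ which is the common edge of a triangle $T\subseteq R$ and a triangle $T'\in\mathcal{T}_\varepsilon$ with $T'\subseteq\mathbb{R}^2\setminus\mathrm{int}(R)$. *)

(* Defs.v *)
From Stdlib Require Import Reals ZArith Relations.
Open Scope R_scope.

Definition Point : Type := (R * R)%type.
Definition Vec3 : Type := (R * R * R)%type.

Definition dist2 (p q : Point) : R :=
  sqrt ((fst p - fst q) ^ 2 + (snd p - snd q) ^ 2).

(* the triangular lattice L_eps = eps * { a e1 + b e2^ : a, b in Z } *)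
Definition in_lattice (eps : R) (p : Point) : Prop :=
  exists a b : Z,
    p = (eps * (IZR a + IZR b / 2), eps * (IZR b * sqrt 3 / 2)).

Definition set_eq (A B : Point -> Prop) : Prop := forall p, A p <-> B p.
Definition subset (A B : Point -> Prop) : Prop := forall p, A p -> B p.
Definition interior (A : Point -> Prop) (p : Point) : Prop :=
  exists r, 0 < r /\ forall q, dist2 p q < r -> A q.
Definition is_open (A : Point -> Prop) : Prop :=
  forall p, A p -> interior A p.
Definition is_bounded (A : Point -> Prop) : Prop :=
  exists M, forall p, A p -> dist2 (0, 0) p <= M.

Definition segment (i j : Point) (p : Point) : Prop :=
  exists t, 0 <= t <= 1 /\
    p = ((1 - t) * fst i + t * fst j, (1 - t) * snd i + t * snd j).
Definition conv3 (a b c : Point) (p : Point) : Prop :=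
  exists s t w, 0 <= s /\ 0 <= t /\ 0 <= w /\ s + t + w = 1 /\
    p = (s * fst a + t * fst b + w * fst c, s * snd a + t * snd b + w * snd c).

Definition is_triangle (eps : R) (T : Point -> Prop) : Prop :=
  exists a b c, in_lattice eps a /\ in_lattice eps b /\ in_lattice eps c /\
    dist2 a b = eps /\ dist2 b c = eps /\ dist2 a c = eps /\ set_eq T (conv3 a b c).

Definition is_edge (eps : R) (E : Point -> Prop) : Prop :=
  exists i j, in_lattice eps i /\ in_lattice eps j /\ dist2 i j = eps /\
    set_eq E (segment i j).

Definition on_sphere (v : Vec3) : Prop :=
  let '(x, y, z) := v in x ^ 2 + y ^ 2 + z ^ 2 = 1.
Definition north : Vec3 := (0, 0, 1).
Definition opp3 (v : Vec3) : Vec3 := let '(x, y, z) := v in (- x, - y, - z).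

(* SF_eps(Omega): u is only relevant on L_eps *)
Definition SF (eps : R) (Omega : Point -> Prop) (u : Point -> Vec3) : Prop :=
  forall i, in_lattice eps i -> on_sphere (u i) /\ (~ Omega i -> u i = north).

Definition in_N (eps : R) (u : Point -> Vec3) (E : Point -> Prop) : Prop :=
  exists i j, in_lattice eps i /\ in_lattice eps j /\ dist2 i j = eps /\
    set_eq E (segment i j) /\ u i = opp3 (u j).
Definition in_C (eps : R) (u : Point -> Vec3) (E : Point -> Prop) : Prop :=
  is_edge eps E /\ ~ in_N eps u E.

Definition neighbours (eps : R) (u : Point -> Vec3) (T T' : Point -> Prop) : Prop :=
  is_triangle eps T /\ is_triangle eps T' /\
  exists E, in_N eps u E /\ set_eq (fun p => T p /\ T' p) E.
Definition tri_connected (eps : R) (u : Point -> Vec3) : (Point -> Prop) -> (Point -> Prop) -> Prop :=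
  clos_refl_trans _ (neighbours eps u).

Definition big_union (S : (Point -> Prop) -> Prop) (p : Point) : Prop :=
  exists T, S T /\ T p.

Definition pairwise_connected_family (eps : R) (u : Point -> Vec3)
  (S : (Point -> Prop) -> Prop) : Prop :=
  (forall T, S T -> is_triangle eps T) /\
  (forall T T', S T -> S T' -> tri_connected eps u T T').

Definition admissible_region (eps : R) (u : Point -> Vec3) (Rg : Point -> Prop) : Prop :=
  exists S, pairwise_connected_family eps u S /\ set_eq Rg (big_union S) /\
    forall S', pairwise_connected_family eps u S' ->
      subset Rg (big_union S') -> subset (big_union S') Rg.

Definition boundary_edge (eps : R) (u : Point -> Vec3) (Rg : Point -> Prop)
  (E : Point -> Prop) : Prop :=
  in_C eps u E /\
  exists T T', is_triangle eps T /\ is_triangle eps T' /\ subset T Rg /\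
    subset T' (fun p => ~ interior Rg p) /\ set_eq (fun p => T p /\ T' p) E.

(* Main.v *)
Require Import Defs.
From Stdlib Require Import Reals ZArith Relations Lra Lia Psatz Arith.
From Stdlib Require Import FunctionalExtensionality PropExtensionality Classical.
Open Scope R_scope.

Open Scope nat_scope.

Section Graph.
Variable V : Type.
Variable E : V -> V -> Prop.

Definition walk (f : nat -> V) (n : nat) := forall k, k < n -> E (f k) (f (S k)).

Lemma rt_walk x y : clos_refl_trans V E x y -> exists f n, f 0 = x /\ f n = y /\ walk f n.
Proof.
  induction 1 as [x y H|x|x y z _ IH1 _ IH2].
  - exists (fun k => if Nat.eqb k 0 then x else y), 1. repeat split; auto.
    intros k Hk. assert (k = 0) by lia. subst. simpl. auto.
  - exists (fun _ => x), 0. repeat split; auto. intros k Hk; lia.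
  - destruct IH1 as (f & n & F0 & Fn & Wf). destruct IH2 as (g & m & G0 & Gm & Wg).
    exists (fun k => if Nat.leb k n then f k else g (k - n)), (n + m).
    repeat split.
    + simpl. auto.
    + destruct (Nat.leb (n + m) n) eqn:Hb.
      * apply Nat.leb_le in Hb. assert (m = 0) by lia. subst. rewrite Nat.add_0_r. congruence.
      * replace (n + m - n) with m by lia. auto.
    + intros k Hk.
      destruct (Nat.leb k n) eqn:H1; destruct (Nat.leb (S k) n) eqn:H2.
      * apply Wf. apply Nat.leb_le in H2. lia.
      * apply Nat.leb_le in H1. apply Nat.leb_gt in H2. assert (k = n) by lia. subst k.
        replace (S n - n) with 1 by lia. rewrite Fn, <- G0. apply Wg. lia.
      * apply Nat.leb_gt in H1. apply Nat.leb_le in H2. lia.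
      * apply Nat.leb_gt in H1. replace (S k - n) with (S (k - n)) by lia. apply Wg. lia.
Qed.

Lemma min_nat (P : nat -> Prop) : (exists n, P n) -> exists n, P n /\ forall m, m < n -> ~ P m.
Proof.
  intros [n Hn].
  destruct (classic (exists n, P n /\ forall m, m < n -> ~ P m)) as [H|H]; auto.
  exfalso.
  assert (forall k, forall m, m <= k -> ~ P m).
  { induction k as [|k IH]; intros m Hm Pm.
    - assert (m = 0) by lia. subst. apply H. exists 0. split; auto. intros; lia.
    - destruct (Nat.eq_dec m (S k)).
      + subst. apply H. exists (S k). split; auto. intros m' Hm'. apply IH. lia.
      + apply (IH m); auto. lia. }
  apply (H0 n n); auto.
Qed.

Hypothesis Esym : forall x y, E x y -> E y x.
Hypothesis deg2 : forall v x y z, E v x -> E v y -> E v z -> x = y \/ x = z \/ y = z.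

Lemma leaves (t1 t2 t4 : V) :
  t1 <> t2 ->
  (forall x y, E t1 x -> E t1 y -> x = y) ->
  (forall x y, E t2 x -> E t2 y -> x = y) ->
  (forall x y, E t4 x -> E t4 y -> x = y) ->
  clos_refl_trans V E t1 t2 -> clos_refl_trans V E t1 t4 -> t4 = t1 \/ t4 = t2.
Proof.
  intros Hne L1 L2 L4 R12 R14.
  destruct (min_nat (fun n => exists f, f 0 = t1 /\ f n = t2 /\ walk f n)) as
    (n & (f & F0 & Fn & Wf) & Hmin).
  { destruct (rt_walk _ _ R12) as (f & n & ?). eauto. }
  assert (Hn : 0 < n). { destruct n; [|lia]. congruence. }
  assert (Inj : forall k l, k < l -> l <= n -> f k <> f l).
  { intros k l Hkl Hln Efk.
    apply (Hmin (n - (l - k))); [lia|].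
    exists (fun m => if Nat.leb m k then f m else f (m + (l - k))).
    repeat split.
    - simpl. auto.
    - destruct (Nat.leb (n - (l - k)) k) eqn:Hb.
      + apply Nat.leb_le in Hb. assert (l = n) by lia. subst.
        assert (n - (n - k) = k) by lia. rewrite H. congruence.
      + replace (n - (l - k) + (l - k)) with n by lia. auto.
    - intros m Hm.
      destruct (Nat.leb m k) eqn:H1; destruct (Nat.leb (S m) k) eqn:H2.
      + apply Wf. apply Nat.leb_le in H2. lia.
      + apply Nat.leb_le in H1. apply Nat.leb_gt in H2. assert (m = k) by lia. subst.
        rewrite Efk. replace (S k + (l - k)) with (S l) by lia. apply Wf. lia.
      + apply Nat.leb_gt in H1. apply Nat.leb_le in H2. lia.
      + apply Nat.leb_gt in H1. replace (S m + (l - k)) with (S (m + (l - k))) by lia.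
        apply Wf. lia. }
  assert (Cl : forall z, clos_refl_trans V E t1 z -> exists k, k <= n /\ f k = z).
  { intros z Hz. apply clos_rt_rtn1_iff in Hz. induction Hz as [|y z Eyz _ IH].
    - exists 0. split; auto. lia.
    - destruct IH as (k & Hk & <-).
      destruct k as [|k].
      + exists 1. split; [lia|]. symmetry. apply L1; [rewrite <- F0|]; auto.
        rewrite F0 in Eyz. auto. rewrite <- F0; apply Wf; lia.
      + destruct (Nat.eq_dec (S k) n) as [Eq|Neq].
        * exists k. split; [lia|]. subst n.
          assert (E t2 (f k)). { rewrite <- Fn. apply Esym. apply Wf. lia. }
          rewrite Fn in Eyz. apply L2; auto.
        * assert (E (f (S k)) (f k)) by (apply Esym, Wf; lia).
          assert (E (f (S k)) (f (S (S k)))) by (apply Wf; lia).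
          destruct (deg2 _ _ _ _ H H0 Eyz) as [Ee|[Ee|Ee]].
          -- exfalso. apply (Inj k (S (S k))); auto; lia.
          -- exists k. split; auto; lia.
          -- exists (S (S k)). split; auto; lia. }
  destruct (Cl t4 R14) as (k & Hk & Fk).
  destruct k as [|k]; [left; congruence|].
  destruct (Nat.eq_dec (S k) n) as [Eq|Neq]; [right; congruence|].
  exfalso. apply (Inj k (S (S k))); try lia.
  apply L4; rewrite <- Fk.
  - apply Esym, Wf; lia.
  - apply Wf; lia.
Qed.
End Graph.

Open Scope R_scope.


Definition ZP := (Z * Z)%type.
Definition Lp (eps : R) (A : ZP) : Point :=
  (eps * (IZR (fst A) + IZR (snd A) / 2), eps * (IZR (snd A) * sqrt 3 / 2)).
Definition phi (eps x y : R) : Point := (eps * (x + y / 2), eps * (y * sqrt 3 / 2)).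
Definition Qz (x y : Z) : Z := (x*x + x*y + y*y)%Z.
Definition adj (A B : ZP) : Prop := Qz (fst B - fst A) (snd B - snd A) = 1%Z.
Definition tri eps A B C := conv3 (Lp eps A) (Lp eps B) (Lp eps C).
Definition refl3 (A B C : ZP) : ZP := (fst A + fst B - fst C, snd A + snd B - snd C)%Z.

Lemma set_ext (A B : Point -> Prop) : set_eq A B -> A = B.
Proof.
  intro H. apply functional_extensionality; intro p.
  apply propositional_extensionality; apply H.
Qed.

Lemma sqrt3_pos : 0 < sqrt 3.
Proof. apply sqrt_lt_R0; lra. Qed.
Lemma sqrt3_sq : sqrt 3 * sqrt 3 = 3.
Proof. apply sqrt_sqrt; lra. Qed.

Lemma phi_inj eps x y x' y' : 0 < eps -> phi eps x y = phi eps x' y' -> x = x' /\ y = y'.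
Proof.
  intros He H; unfold phi in H; injection H; intros H2 H1.
  pose proof sqrt3_pos.
  assert (y = y').
  { apply Rmult_eq_reg_l with (eps * (sqrt 3 / 2)); [|nra].
    nra. }
  subst y'. split; auto.
  apply Rmult_eq_reg_l with eps; [|lra]. nra.
Qed.

Lemma Lp_phi eps A : Lp eps A = phi eps (IZR (fst A)) (IZR (snd A)).
Proof. reflexivity. Qed.

Lemma Lp_inj eps A B : 0 < eps -> Lp eps A = Lp eps B -> A = B.
Proof.
  intros He H. rewrite !Lp_phi in H. apply phi_inj in H; auto.
  destruct H as [H1 H2]. apply eq_IZR in H1. apply eq_IZR in H2.
  destruct A, B; simpl in *; subst; auto.
Qed.

Lemma combo_phi eps s t w x1 y1 x2 y2 x3 y3 :
  (s * fst (phi eps x1 y1) + t * fst (phi eps x2 y2) + w * fst (phi eps x3 y3),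
   s * snd (phi eps x1 y1) + t * snd (phi eps x2 y2) + w * snd (phi eps x3 y3))
  = phi eps (s*x1 + t*x2 + w*x3) (s*y1 + t*y2 + w*y3).
Proof. unfold phi; simpl; apply f_equal2; field. Qed.

Lemma tri_phi eps A B C p : tri eps A B C p ->
  exists s t w, 0 <= s /\ 0 <= t /\ 0 <= w /\ s + t + w = 1 /\
   p = phi eps (s * IZR (fst A) + t * IZR (fst B) + w * IZR (fst C))
               (s * IZR (snd A) + t * IZR (snd B) + w * IZR (snd C)).
Proof.
  intros (s & t & w & H1 & H2 & H3 & H4 & H5).
  exists s, t, w; repeat split; auto.
  rewrite H5, !Lp_phi. apply combo_phi.
Qed.

Lemma phi_tri eps A B C s t w : 0 <= s -> 0 <= t -> 0 <= w -> s + t + w = 1 ->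
  tri eps A B C (phi eps (s * IZR (fst A) + t * IZR (fst B) + w * IZR (fst C))
               (s * IZR (snd A) + t * IZR (snd B) + w * IZR (snd C))).
Proof.
  intros. exists s, t, w; repeat split; auto.
  rewrite !Lp_phi, combo_phi. reflexivity.
Qed.

Lemma in_lattice_Lp eps p : in_lattice eps p -> exists A, p = Lp eps A.
Proof. intros (a & b & H). exists (a, b). exact H. Qed.

Lemma Lp_in_lattice eps A : in_lattice eps (Lp eps A).
Proof. exists (fst A), (snd A). reflexivity. Qed.

Lemma Qz_nonneg x y : (0 <= Qz x y)%Z.
Proof. unfold Qz; nia. Qed.

Lemma dist_Lp eps A B : 0 < eps ->
  dist2 (Lp eps A) (Lp eps B) = eps * sqrt (IZR (Qz (fst B - fst A) (snd B - snd A))).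
Proof.
  intro He. unfold dist2, Lp; cbn [fst snd].
  unfold Qz. rewrite !plus_IZR, !mult_IZR, !minus_IZR.
  set (a1 := IZR (fst A)). set (a2 := IZR (snd A)).
  set (b1 := IZR (fst B)). set (b2 := IZR (snd B)).
  replace ((eps * (a1 + a2 / 2) - eps * (b1 + b2 / 2)) ^ 2 +
     (eps * (a2 * sqrt 3 / 2) - eps * (b2 * sqrt 3 / 2)) ^ 2)
    with ((eps * eps) * ((b1 - a1) * (b1 - a1) + (b1 - a1) * (b2 - a2) + (b2 - a2) * (b2 - a2))).
  2:{ pose proof sqrt3_sq. replace ((eps * (a2 * sqrt 3 / 2) - eps * (b2 * sqrt 3 / 2)) ^ 2)
      with (eps*eps*(a2-b2)*(a2-b2) * (sqrt 3 * sqrt 3) / 4) by field.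
      rewrite H. field. }
  rewrite sqrt_mult_alt by nra. rewrite sqrt_square by lra. reflexivity.
Qed.

Lemma dist_adj eps A B : 0 < eps -> dist2 (Lp eps A) (Lp eps B) = eps -> adj A B.
Proof.
  intros He H. rewrite dist_Lp in H by auto.
  assert (sqrt (IZR (Qz (fst B - fst A) (snd B - snd A))) = 1).
  { apply Rmult_eq_reg_l with eps; lra. }
  unfold adj. apply eq_IZR.
  pose proof (Qz_nonneg (fst B - fst A) (snd B - snd A)) as Hn. apply IZR_le in Hn.
  rewrite <- (sqrt_sqrt (IZR _)) by lra. rewrite H0. simpl; ring.
Qed.

Lemma adj_dist eps A B : 0 < eps -> adj A B -> dist2 (Lp eps A) (Lp eps B) = eps.
Proof.
  intros He H. rewrite dist_Lp by auto. unfold adj in H. rewrite H.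
  rewrite sqrt_1. ring.
Qed.

Lemma dist_self p : dist2 p p = 0.
Proof. unfold dist2. replace ((fst p - fst p) ^ 2 + (snd p - snd p) ^ 2) with 0 by ring.
  apply sqrt_0. Qed.

Lemma adj_neq A B : adj A B -> A <> B.
Proof. intros H E; subst. unfold adj, Qz in H. lia. Qed.

Lemma adj_sym A B : adj A B -> adj B A.
Proof. unfold adj, Qz; intros H. nia. Qed.

Lemma unit_cases x y : Qz x y = 1%Z ->
  (x = 1 /\ y = 0 \/ x = 0 /\ y = 1 \/ x = -1 /\ y = 1 \/
   x = -1 /\ y = 0 \/ x = 0 /\ y = -1 \/ x = 1 /\ y = -1)%Z.
Proof.
  unfold Qz; intro H.
  assert (-1 <= x <= 1)%Z by nia. assert (-1 <= y <= 1)%Z by nia.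
  assert (x = -1 \/ x = 0 \/ x = 1)%Z as Hx by lia.
  assert (y = -1 \/ y = 0 \/ y = 1)%Z as Hy by lia.
  destruct Hx as [->| [->| ->]]; destruct Hy as [->| [->| ->]]; simpl in H; try discriminate; lia.
Qed.

Lemma D2 e1 e2 g1 g2 : Qz e1 e2 = 1%Z -> Qz g1 g2 = 1%Z -> Qz (g1 - e1) (g2 - e2) = 1%Z ->
  ((e1 * g2 - e2 * g1) * (e1 * g2 - e2 * g1) = 1)%Z.
Proof.
  intros H1 H2 H3. apply unit_cases in H1. apply unit_cases in H2.
  destruct H1 as [[-> ->]|[[-> ->]|[[-> ->]|[[-> ->]|[[-> ->]|[-> ->]]]]]];
  destruct H2 as [[-> ->]|[[-> ->]|[[-> ->]|[[-> ->]|[[-> ->]|[-> ->]]]]]];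
  simpl in *; try discriminate; reflexivity.
Qed.

Lemma det_small d1 d2 g1 g2 : Qz d1 d2 = 1%Z -> Qz g1 g2 = 1%Z ->
  (-1 <= d1 * g2 - d2 * g1 <= 1)%Z.
Proof.
  intros H1 H2. apply unit_cases in H1. apply unit_cases in H2.
  destruct H1 as [[-> ->]|[[-> ->]|[[-> ->]|[[-> ->]|[[-> ->]|[-> ->]]]]]];
  destruct H2 as [[-> ->]|[[-> ->]|[[-> ->]|[[-> ->]|[[-> ->]|[-> ->]]]]]];
  simpl; lia.
Qed.


Definition Dt (I J K : ZP) : Z :=
  ((fst J - fst I) * (snd K - snd I) - (snd J - snd I) * (fst K - fst I))%Z.
Definition zJ I J K (X : ZP) : Z :=
  (Dt I J K * ((fst X - fst I) * (snd K - snd I) - (snd X - snd I) * (fst K - fst I)))%Z.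
Definition zK I J K (X : ZP) : Z :=
  (Dt I J K * ((fst J - fst I) * (snd X - snd I) - (snd J - snd I) * (fst X - fst I)))%Z.
Definition zI I J K X : Z := (1 - zJ I J K X - zK I J K X)%Z.
Definition rJ I J K (x y : R) : R :=
  IZR (Dt I J K) * ((x - IZR (fst I)) * IZR (snd K - snd I) - (y - IZR (snd I)) * IZR (fst K - fst I)).
Definition rK I J K (x y : R) : R :=
  IZR (Dt I J K) * (IZR (fst J - fst I) * (y - IZR (snd I)) - IZR (snd J - snd I) * (x - IZR (fst I))).

Section Ref.
Variables I J K : ZP.
Hypothesis HIJ : adj I J.
Hypothesis HIK : adj I K.
Hypothesis HJK : adj J K.

Lemma Dt_sq : (Dt I J K * Dt I J K = 1)%Z.
Proof.
  unfold Dt. apply D2; auto.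
  unfold adj in HJK. rewrite <- HJK. unfold Qz. ring.
Qed.

Lemma Dt_pm : (Dt I J K = 1 \/ Dt I J K = -1)%Z.
Proof. pose proof Dt_sq. assert (-1 <= Dt I J K <= 1)%Z by nia. nia. Qed.

Lemma zJ_I : zJ I J K I = 0%Z. Proof. unfold zJ; ring. Qed.
Lemma zK_I : zK I J K I = 0%Z. Proof. unfold zK; ring. Qed.
Lemma zJ_J : zJ I J K J = 1%Z. Proof. unfold zJ. rewrite <- Dt_sq. unfold Dt. ring. Qed.
Lemma zK_J : zK I J K J = 0%Z. Proof. unfold zK; ring. Qed.
Lemma zJ_K : zJ I J K K = 0%Z. Proof. unfold zJ; ring. Qed.
Lemma zK_K : zK I J K K = 1%Z. Proof. unfold zK. rewrite <- Dt_sq. unfold Dt. ring. Qed.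
Lemma zJ_R : zJ I J K (refl3 I J K) = 1%Z.
Proof. unfold zJ, refl3; simpl. rewrite <- Dt_sq. unfold Dt. ring. Qed.
Lemma zK_R : zK I J K (refl3 I J K) = (-1)%Z.
Proof. unfold zK, refl3; simpl. replace (-1)%Z with (- (Dt I J K * Dt I J K))%Z by (rewrite Dt_sq; ring).
  unfold Dt. ring. Qed.

Lemma decomp1 X : (fst X - fst I = zJ I J K X * (fst J - fst I) + zK I J K X * (fst K - fst I))%Z.
Proof.
  pose proof Dt_sq as H. unfold zJ, zK.
  transitivity (Dt I J K * Dt I J K * (fst X - fst I))%Z; [rewrite H; ring|].
  unfold Dt; ring.
Qed.
Lemma decomp2 X : (snd X - snd I = zJ I J K X * (snd J - snd I) + zK I J K X * (snd K - snd I))%Z.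
Proof.
  pose proof Dt_sq as H. unfold zJ, zK.
  transitivity (Dt I J K * Dt I J K * (snd X - snd I))%Z; [rewrite H; ring|].
  unfold Dt; ring.
Qed.

Lemma zJ_step X Y : adj X Y -> (-1 <= zJ I J K Y - zJ I J K X <= 1)%Z.
Proof.
  intro H.
  replace (zJ I J K Y - zJ I J K X)%Z with
    (Dt I J K * ((fst Y - fst X) * (snd K - snd I) - (snd Y - snd X) * (fst K - fst I)))%Z
    by (unfold zJ; ring).
  pose proof (det_small _ _ _ _ H HIK).
  destruct Dt_pm as [-> | ->]; lia.
Qed.

Lemma zK_step X Y : adj X Y -> (-1 <= zK I J K Y - zK I J K X <= 1)%Z.
Proof.
  intro H.
  replace (zK I J K Y - zK I J K X)%Z with
    (- Dt I J K * ((fst Y - fst X) * (snd J - snd I) - (snd Y - snd X) * (fst J - fst I)))%Z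
    by (unfold zK; ring).
  pose proof (det_small _ _ _ _ H HIJ).
  destruct Dt_pm as [-> | ->]; lia.
Qed.

Lemma zI_step X Y : adj X Y -> (-1 <= zI I J K Y - zI I J K X <= 1)%Z.
Proof.
  intro H.
  replace (zI I J K Y - zI I J K X)%Z with
    (- Dt I J K * ((fst Y - fst X) * (snd K - snd J) - (snd Y - snd X) * (fst K - fst J)))%Z
    by (unfold zI, zJ, zK; ring).
  pose proof (det_small _ _ _ _ H HJK).
  destruct Dt_pm as [-> | ->]; lia.
Qed.

Lemma rJ_combo (A B C : ZP) s t w : s + t + w = 1 ->
  rJ I J K (s * IZR (fst A) + t * IZR (fst B) + w * IZR (fst C))
           (s * IZR (snd A) + t * IZR (snd B) + w * IZR (snd C))
  = s * IZR (zJ I J K A) + t * IZR (zJ I J K B) + w * IZR (zJ I J K C).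
Proof.
  intro H. unfold rJ, zJ. repeat (rewrite mult_IZR || rewrite minus_IZR).
  replace s with (1 - t - w) by lra. ring.
Qed.

Lemma rK_combo (A B C : ZP) s t w : s + t + w = 1 ->
  rK I J K (s * IZR (fst A) + t * IZR (fst B) + w * IZR (fst C))
           (s * IZR (snd A) + t * IZR (snd B) + w * IZR (snd C))
  = s * IZR (zK I J K A) + t * IZR (zK I J K B) + w * IZR (zK I J K C).
Proof.
  intro H. unfold rK, zK. repeat (rewrite mult_IZR || rewrite minus_IZR).
  replace s with (1 - t - w) by lra. ring.
Qed.

Lemma cand X : (zJ I J K X = 0 \/ zJ I J K X = 1)%Z -> (zI I J K X = 0 \/ zI I J K X = 1)%Z ->
  X = I \/ X = J \/ X = K \/ X = refl3 I J K.
Proof.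
  intros H1 H2. pose proof (decomp1 X) as E1. pose proof (decomp2 X) as E2.
  assert (zK I J K X = 1 - zJ I J K X - zI I J K X)%Z as Hb by (unfold zI; ring).
  revert E1 E2 H1 H2 Hb.
  generalize (zJ I J K X) (zK I J K X) (zI I J K X). intros a b c E1 E2 H1 H2 Hb.
  destruct X as [x1 x2], I as [i1 i2], J as [j1 j2], K as [k1 k2]; unfold refl3; simpl in *.
  destruct H1 as [Ha|Ha]; destruct H2 as [Hc|Hc]; subst a c; simpl in Hb; subst b.
  all: try (left; f_equal; lia).
  all: try (right; left; f_equal; lia).
  all: try (right; right; left; f_equal; lia).
  all: try (right; right; right; f_equal; lia).
Qed.

Lemma cand3 X : (zJ I J K X = 0 \/ zJ I J K X = 1)%Z -> (zK I J K X = 0 \/ zK I J K X = 1)%Z ->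
  (zI I J K X = 0 \/ zI I J K X = 1)%Z -> X = I \/ X = J \/ X = K.
Proof.
  intros H1 H3 H2. destruct (cand X H1 H2) as [E|[E|[E|E]]]; auto.
  exfalso. subst X. rewrite zK_R in H3. lia.
Qed.

End Ref.


Lemma range01 (a b c : Z) s t w : 0<=s -> 0<=t -> 0<=w -> s+t+w=1 ->
  (-1 <= b-a <= 1)%Z -> (-1 <= c-a <=1)%Z -> (-1<= c-b <= 1)%Z ->
  0 < s*IZR a + t*IZR b + w*IZR c < 1 ->
  (a=0\/a=1)%Z /\ (b=0\/b=1)%Z /\ (c=0\/c=1)%Z.
Proof.
  intros Hs Ht Hw Hsum H1 H2 H3 [Hl Hu].
  assert (Hlo : (0 <= a /\ 0 <= b /\ 0 <= c)%Z).
  { destruct (Z_lt_le_dec a 0); [|destruct (Z_lt_le_dec b 0); [|destruct (Z_lt_le_dec c 0)]];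
      try lia; exfalso;
      (assert (a <= 0 /\ b <= 0 /\ c <= 0)%Z as [Ha [Hb Hc]] by lia);
      apply IZR_le in Ha; apply IZR_le in Hb; apply IZR_le in Hc; nra. }
  assert (Hhi : (a <= 1 /\ b <= 1 /\ c <= 1)%Z).
  { destruct (Z_lt_le_dec 1 a); [|destruct (Z_lt_le_dec 1 b); [|destruct (Z_lt_le_dec 1 c)]];
      try lia; exfalso;
      (assert (1 <= a /\ 1 <= b /\ 1 <= c)%Z as [Ha [Hb Hc]] by lia);
      apply IZR_le in Ha; apply IZR_le in Hb; apply IZR_le in Hc; nra. }
  lia.
Qed.

Lemma rJ_IZR I J K X : rJ I J K (IZR (fst X)) (IZR (snd X)) = IZR (zJ I J K X).
Proof. unfold rJ, zJ. repeat (rewrite mult_IZR || rewrite minus_IZR). reflexivity. Qed.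
Lemma rK_IZR I J K X : rK I J K (IZR (fst X)) (IZR (snd X)) = IZR (zK I J K X).
Proof. unfold rK, zK. repeat (rewrite mult_IZR || rewrite minus_IZR). reflexivity. Qed.

Lemma vert1 eps A B C : tri eps A B C (Lp eps A).
Proof. exists 1, 0, 0. repeat split; try lra. destruct (Lp eps A); simpl; f_equal; ring. Qed.
Lemma vert2 eps A B C : tri eps A B C (Lp eps B).
Proof. exists 0, 1, 0. repeat split; try lra. destruct (Lp eps B); simpl; f_equal; ring. Qed.
Lemma vert3 eps A B C : tri eps A B C (Lp eps C).
Proof. exists 0, 0, 1. repeat split; try lra. destruct (Lp eps C); simpl; f_equal; ring. Qed.

Lemma lat_in_tri eps A B C X : 0 < eps -> adj A B -> adj A C -> adj B C ->
  tri eps A B C (Lp eps X) -> X = A \/ X = B \/ X = C.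
Proof.
  intros He H1 H2 H3 HT. apply tri_phi in HT.
  destruct HT as (s & t & w & Hs & Ht & Hw & Hsum & E).
  rewrite Lp_phi in E. apply phi_inj in E; auto. destruct E as [E1 E2].
  assert (EJ : IZR (zJ A B C X) = t).
  { rewrite <- rJ_IZR, E1, E2, rJ_combo by auto.
    rewrite zJ_I, zJ_J, zJ_K by auto. simpl; ring. }
  assert (EK : IZR (zK A B C X) = w).
  { rewrite <- rK_IZR, E1, E2, rK_combo by auto.
    rewrite zK_I, zK_J, zK_K by auto. simpl; ring. }
  assert (0 <= zJ A B C X)%Z by (apply le_IZR; lra).
  assert (0 <= zK A B C X)%Z by (apply le_IZR; lra).
  assert (zJ A B C X + zK A B C X <= 1)%Z by (apply le_IZR; rewrite plus_IZR; lra).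
  apply cand3; auto; unfold zI; lia.
Qed.

Lemma seg_tri eps P Q R p : segment (Lp eps P) (Lp eps Q) p -> tri eps P Q R p.
Proof.
  intros (t & Ht & E). exists (1 - t), t, 0. repeat split; try lra.
  rewrite E. f_equal; ring.
Qed.

Lemma adj_refl3_1 P Q R : adj Q R -> adj P (refl3 P Q R).
Proof. unfold adj, refl3, Qz; simpl; intro H; rewrite <- H; ring. Qed.
Lemma adj_refl3_2 P Q R : adj P R -> adj Q (refl3 P Q R).
Proof. unfold adj, refl3, Qz; simpl; intro H; rewrite <- H; ring. Qed.

Definition rot (P Q : ZP) : ZP :=
  (fst P - (snd Q - snd P), snd P + (fst Q - fst P) + (snd Q - snd P))%Z.
Lemma adj_rot1 P Q : adj P Q -> adj P (rot P Q).
Proof. unfold adj, rot, Qz; simpl; intro H; rewrite <- H; ring. Qed.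
Lemma adj_rot2 P Q : adj P Q -> adj Q (rot P Q).
Proof. unfold adj, rot, Qz; simpl; intro H; rewrite <- H; ring. Qed.

Lemma refl3_neq P Q R : adj P Q -> R <> refl3 P Q R.
Proof.
  intros H E. unfold refl3 in E. destruct R as [r1 r2]. injection E; intros E2 E1.
  unfold adj, Qz in H. nia.
Qed.

Lemma lat_in_seg eps P Q X : 0 < eps -> adj P Q ->
  segment (Lp eps P) (Lp eps Q) (Lp eps X) -> X = P \/ X = Q.
Proof.
  intros He H Hs.
  set (R := rot P Q).
  assert (HPR : adj P R) by (apply adj_rot1; auto).
  assert (HQR : adj Q R) by (apply adj_rot2; auto).
  pose proof (lat_in_tri eps P Q R X He H HPR HQR (seg_tri _ _ _ R _ Hs)) as T1.
  pose proof (lat_in_tri eps P Q (refl3 P Q R) X He H (adj_refl3_1 _ _ _ HQR)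
       (adj_refl3_2 _ _ _ HPR) (seg_tri _ _ _ _ _ Hs)) as T2.
  destruct T1 as [|[|T1]]; auto. destruct T2 as [|[|T2]]; auto.
  exfalso. apply (refl3_neq P Q R H). congruence.
Qed.

Lemma third P Q R C : adj P Q -> adj P R -> adj Q R -> adj P C -> adj Q C ->
  C = R \/ C = refl3 P Q R.
Proof.
  intros H1 H2 H3 H4 H5.
  pose proof (zJ_step P Q R H1 H2 H3 _ _ H4) as S1.
  pose proof (zJ_step P Q R H1 H2 H3 _ _ H5) as S2.
  pose proof (zI_step P Q R H1 H2 H3 _ _ H4) as S3.
  pose proof (zI_step P Q R H1 H2 H3 _ _ H5) as S4.
  unfold zI in S3, S4.
  rewrite (zJ_I P Q R) in *; rewrite (zK_I P Q R) in *;
  rewrite (zJ_J P Q R H1 H2 H3) in *; rewrite (zK_J P Q R) in *.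
  destruct (cand P Q R H1 H2 H3 C) as [E|[E|[E|E]]]; auto.
  - lia.
  - unfold zI; lia.
  - exfalso; apply (adj_neq P C); auto.
  - exfalso; apply (adj_neq Q C); auto.
Qed.

Lemma conv3_swap12 a b c : conv3 a b c = conv3 b a c.
Proof.
  apply set_ext; intro p; split; intros (s & t & w & H1 & H2 & H3 & H4 & E);
  exists t, s, w; repeat split; auto; try lra; rewrite E; f_equal; ring.
Qed.
Lemma conv3_swap23 a b c : conv3 a b c = conv3 a c b.
Proof.
  apply set_ext; intro p; split; intros (s & t & w & H1 & H2 & H3 & H4 & E);
  exists s, w, t; repeat split; auto; try lra; rewrite E; f_equal; ring.
Qed.
Lemma tri_swap12 eps A B C : tri eps A B C = tri eps B A C.
Proof. apply conv3_swap12. Qed.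
Lemma tri_swap23 eps A B C : tri eps A B C = tri eps A C B.
Proof. apply conv3_swap23. Qed.

Ltac tperm := first [reflexivity | rewrite tri_swap12; reflexivity | rewrite tri_swap23; reflexivity
  | rewrite tri_swap12, tri_swap23; reflexivity | rewrite tri_swap23, tri_swap12; reflexivity
  | rewrite tri_swap12, tri_swap23, tri_swap12; reflexivity].

Lemma refl3_comm A B C : refl3 A B C = refl3 B A C.
Proof. unfold refl3; f_equal; ring. Qed.
Lemma refl3_invol I J K : refl3 I J (refl3 I J K) = K.
Proof. unfold refl3; destruct K; simpl; f_equal; ring. Qed.

Lemma edge_of eps P Q A B C : (P=A\/P=B\/P=C) -> (Q=A\/Q=B\/Q=C) -> P<>Q ->
  ((P=A/\Q=B \/ P=B/\Q=A) /\ tri eps A B C = tri eps P Q C) \/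
  ((P=B/\Q=C \/ P=C/\Q=B) /\ tri eps A B C = tri eps P Q A) \/
  ((P=A/\Q=C \/ P=C/\Q=A) /\ tri eps A B C = tri eps P Q B).
Proof.
  intros HP HQ HPQ.
  destruct HP as [ -> | [ -> | -> ] ]; destruct HQ as [ -> | [ -> | -> ] ]; try congruence.
  - left; split; auto; tperm.
  - right; right; split; auto; tperm.
  - left; split; auto; tperm.
  - right; left; split; auto; tperm.
  - right; right; split; auto; tperm.
  - right; left; split; auto; tperm.
Qed.



Lemma is_tri_inv eps T : 0 < eps -> is_triangle eps T ->
  exists A B C, adj A B /\ adj B C /\ adj A C /\ T = tri eps A B C.
Proof.
  intros He (a & b & c & Ha & Hb & Hc & Dab & Dbc & Dac & E).
  apply in_lattice_Lp in Ha as [A ->]. apply in_lattice_Lp in Hb as [B ->].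
  apply in_lattice_Lp in Hc as [C ->].
  exists A, B, C. repeat split; try (apply dist_adj with eps; auto).
  apply set_ext; exact E.
Qed.

Lemma tri_is eps A B C : 0 < eps -> adj A B -> adj B C -> adj A C -> is_triangle eps (tri eps A B C).
Proof.
  intros. exists (Lp eps A), (Lp eps B), (Lp eps C).
  repeat split; try apply Lp_in_lattice; try (apply adj_dist; auto); auto.
Qed.

Lemma seg_l a b : segment a b a.
Proof. exists 0. split; [lra|]. destruct a; simpl; f_equal; ring. Qed.
Lemma seg_r a b : segment a b b.
Proof. exists 1. split; [lra|]. destruct b; simpl; f_equal; ring. Qed.

Lemma G1_main eps P Q R0 A' B' C' : 0<eps -> adj P Q -> adj P R0 -> adj Q R0 ->
  adj A' B' -> adj B' C' -> adj A' C' ->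
  set_eq (fun p => tri eps P Q R0 p /\ tri eps A' B' C' p) (segment (Lp eps P) (Lp eps Q)) ->
  tri eps A' B' C' = tri eps P Q (refl3 P Q R0).
Proof.
  intros He H1 H2 H3 H4 H5 H6 HE.
  assert (HP : P = A' \/ P = B' \/ P = C').
  { apply lat_in_tri with eps; auto. apply (proj2 (HE _) (seg_l _ _)). }
  assert (HQ : Q = A' \/ Q = B' \/ Q = C').
  { apply lat_in_tri with eps; auto. apply (proj2 (HE _) (seg_r _ _)). }
  assert (HR : exists R1, tri eps A' B' C' = tri eps P Q R1 /\ adj P R1 /\ adj Q R1).
  { destruct (edge_of eps P Q A' B' C' HP HQ (adj_neq _ _ H1)) as [[O E]|[[O E]|[O E]]].
    - exists C'; split; auto. destruct O as [[-> ->]|[-> ->]]; split; auto.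
    - exists A'; split; auto. destruct O as [[-> ->]|[-> ->]]; split; first [assumption | apply adj_sym; assumption].
    - exists B'; split; auto. destruct O as [[-> ->]|[-> ->]]; split; first [assumption | apply adj_sym; assumption]. }
  destruct HR as (R1 & E & HPR & HQR).
  rewrite E. destruct (third P Q R0 R1 H1 H2 H3 HPR HQR) as [->| ->]; auto.
  exfalso.
  assert (segment (Lp eps P) (Lp eps Q) (Lp eps R0)).
  { apply HE. split; [apply vert3|]. rewrite E. apply vert3. }
  destruct (lat_in_seg eps P Q R0 He H1 H) as [->| ->].
  - apply (adj_neq _ _ H2); auto.
  - apply (adj_neq _ _ H3); auto.
Qed.

Definition Nz eps (u : Point -> Vec3) X Y :=
  u (Lp eps X) = opp3 (u (Lp eps Y)) \/ u (Lp eps Y) = opp3 (u (Lp eps X)).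

Lemma G1 eps u A B C T' : 0<eps -> adj A B -> adj B C -> adj A C ->
  neighbours eps u (tri eps A B C) T' ->
  (Nz eps u A B /\ T' = tri eps A B (refl3 A B C)) \/
  (Nz eps u B C /\ T' = tri eps B C (refl3 B C A)) \/
  (Nz eps u A C /\ T' = tri eps A C (refl3 A C B)).
Proof.
  intros He HAB HBC HAC (_ & HT' & E & HN & HE).
  apply is_tri_inv in HT' as (A' & B' & C' & H4 & H5 & H6 & ->); auto.
  destruct HN as (i' & j' & Hi & Hj & Hd & HEs & Hu).
  apply in_lattice_Lp in Hi as [P ->]. apply in_lattice_Lp in Hj as [Q ->].
  apply dist_adj in Hd; auto.
  apply set_ext in HEs. subst E.
  assert (HP : P = A \/ P = B \/ P = C).
  { apply lat_in_tri with eps; auto. apply (proj2 (HE _) (seg_l _ _)). }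
  assert (HQ : Q = A \/ Q = B \/ Q = C).
  { apply lat_in_tri with eps; auto. apply (proj2 (HE _) (seg_r _ _)). }
  destruct (edge_of eps P Q A B C HP HQ (adj_neq _ _ Hd)) as [[O E]|[[O E]|[O E]]];
    rewrite E in HE.
  - left. destruct O as [[-> ->]|[-> ->]].
    + split; [left; auto|]. apply (G1_main eps A B C); auto.
    + split; [right; auto|]. rewrite (G1_main eps B A C A' B' C'); auto; try apply adj_sym; auto.
      rewrite refl3_comm; tperm.
  - right; left. destruct O as [[-> ->]|[-> ->]].
    + split; [left; auto|]. apply (G1_main eps B C A); auto; apply adj_sym; auto.
    + split; [right; auto|]. rewrite (G1_main eps C B A A' B' C'); auto; try apply adj_sym; auto.
      rewrite refl3_comm; tperm.
  - right; right. destruct O as [[-> ->]|[-> ->]].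
    + split; [left; auto|]. apply (G1_main eps A C B); auto; apply adj_sym; auto.
    + split; [right; auto|]. rewrite (G1_main eps C A B A' B' C'); auto; try apply adj_sym; auto.
      rewrite refl3_comm; tperm.
Qed.



Lemma notadj_KR I J K : adj I J -> adj I K -> adj J K -> ~ adj K (refl3 I J K).
Proof. unfold adj, refl3, Qz; simpl; intros; nia. Qed.

Lemma zI_combo I J K (A B C : ZP) s t w : s + t + w = 1 ->
  1 - rJ I J K (s * IZR (fst A) + t * IZR (fst B) + w * IZR (fst C))
           (s * IZR (snd A) + t * IZR (snd B) + w * IZR (snd C))
    - rK I J K (s * IZR (fst A) + t * IZR (fst B) + w * IZR (fst C))
           (s * IZR (snd A) + t * IZR (snd B) + w * IZR (snd C))
  = s * IZR (zI I J K A) + t * IZR (zI I J K B) + w * IZR (zI I J K C).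
Proof.
  intro H. rewrite rJ_combo, rK_combo by auto. unfold zI.
  rewrite !minus_IZR. replace s with (1 - t - w) by lra. ring.
Qed.

Lemma inter_seg eps I J K : 0 < eps -> adj I J -> adj I K -> adj J K ->
  set_eq (fun p => tri eps I J K p /\ tri eps I J (refl3 I J K) p) (segment (Lp eps I) (Lp eps J)).
Proof.
  intros He H1 H2 H3 p; split.
  - intros [T1 T2]. apply tri_phi in T1 as (s & t & w & Hs & Ht & Hw & Hsum & E).
    apply tri_phi in T2 as (s' & t' & w' & Hs' & Ht' & Hw' & Hsum' & E').
    rewrite E in E'. apply phi_inj in E' as [E1 E2]; auto.
    assert (rK I J K (s * IZR (fst I) + t * IZR (fst J) + w * IZR (fst K))
           (s * IZR (snd I) + t * IZR (snd J) + w * IZR (snd K)) =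
         rK I J K (s' * IZR (fst I) + t' * IZR (fst J) + w' * IZR (fst (refl3 I J K)))
           (s' * IZR (snd I) + t' * IZR (snd J) + w' * IZR (snd (refl3 I J K)))) as Hr
      by (rewrite E1, E2; reflexivity).
    rewrite !rK_combo in Hr by auto.
    rewrite zK_I, zK_J, zK_K, zK_R in Hr by auto. simpl in Hr.
    assert (w = 0) by lra. subst w.
    exists t. split; [lra|]. rewrite E, !Lp_phi. unfold phi; simpl.
    replace s with (1 - t) by lra. f_equal; field.
  - intro Hs. split; apply seg_tri; auto.
Qed.

Lemma mid_tri eps I J K A B C : 0 < eps -> adj I J -> adj I K -> adj J K ->
  adj A B -> adj B C -> adj A C ->
  tri eps A B C ((1 - /2) * fst (Lp eps I) + /2 * fst (Lp eps J),
                 (1 - /2) * snd (Lp eps I) + /2 * snd (Lp eps J)) ->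
  tri eps A B C = tri eps I J K \/ tri eps A B C = tri eps I J (refl3 I J K).
Proof.
  intros He H1 H2 H3 H4 H5 H6 HT.
  apply tri_phi in HT as (s & t & w & Hs & Ht & Hw & Hsum & E).
  rewrite !Lp_phi in E.
  replace ((1 - / 2) * fst (phi eps (IZR (fst I)) (IZR (snd I))) + / 2 * fst (phi eps (IZR (fst J)) (IZR (snd J))),
     (1 - / 2) * snd (phi eps (IZR (fst I)) (IZR (snd I))) + / 2 * snd (phi eps (IZR (fst J)) (IZR (snd J))))
   with (phi eps (/2 * IZR (fst I) + /2 * IZR (fst J) + 0 * IZR (fst K))
                 (/2 * IZR (snd I) + /2 * IZR (snd J) + 0 * IZR (snd K))) in E
   by (unfold phi; simpl; f_equal; field).
  apply phi_inj in E as [E1 E2]; auto.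
  assert (HJ : rJ I J K (/2 * IZR (fst I) + /2 * IZR (fst J) + 0 * IZR (fst K))
                 (/2 * IZR (snd I) + /2 * IZR (snd J) + 0 * IZR (snd K)) =
               rJ I J K (s * IZR (fst A) + t * IZR (fst B) + w * IZR (fst C))
                 (s * IZR (snd A) + t * IZR (snd B) + w * IZR (snd C))) by (rewrite E1, E2; auto).
  assert (HI : 1 - rJ I J K (/2 * IZR (fst I) + /2 * IZR (fst J) + 0 * IZR (fst K))
                 (/2 * IZR (snd I) + /2 * IZR (snd J) + 0 * IZR (snd K))
               - rK I J K (/2 * IZR (fst I) + /2 * IZR (fst J) + 0 * IZR (fst K))
                 (/2 * IZR (snd I) + /2 * IZR (snd J) + 0 * IZR (snd K)) =
               1 - rJ I J K (s * IZR (fst A) + t * IZR (fst B) + w * IZR (fst C))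
                 (s * IZR (snd A) + t * IZR (snd B) + w * IZR (snd C))
               - rK I J K (s * IZR (fst A) + t * IZR (fst B) + w * IZR (fst C))
                 (s * IZR (snd A) + t * IZR (snd B) + w * IZR (snd C))) by (rewrite E1, E2; auto).
  rewrite !zI_combo in HI by lra.
  rewrite !rJ_combo in HJ by lra.
  unfold zI in HI at 1 2 3.
  rewrite zJ_I, zJ_J, zJ_K, zK_I, zK_J, zK_K in HI by auto.
  rewrite zJ_I, zJ_J, zJ_K in HJ by auto. simpl in HI, HJ.
  pose proof (zJ_step I J K H1 H2 H3 _ _ H4). pose proof (zJ_step I J K H1 H2 H3 _ _ H5).
  pose proof (zJ_step I J K H1 H2 H3 _ _ H6).
  pose proof (zI_step I J K H1 H2 H3 _ _ H4). pose proof (zI_step I J K H1 H2 H3 _ _ H5).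
  pose proof (zI_step I J K H1 H2 H3 _ _ H6).
  destruct (range01 (zJ I J K A) (zJ I J K B) (zJ I J K C) s t w) as (RA & RB & RC); auto; try lra.
  destruct (range01 (zI I J K A) (zI I J K B) (zI I J K C) s t w) as (SA & SB & SC); auto; try lra.
  pose proof (cand I J K H1 H2 H3 A RA SA) as CA.
  pose proof (cand I J K H1 H2 H3 B RB SB) as CB.
  pose proof (cand I J K H1 H2 H3 C RC SC) as CC.
  pose proof (notadj_KR I J K H1 H2 H3) as N1.
  assert (N2 : ~ adj (refl3 I J K) K) by (intro; apply N1; apply adj_sym; auto).
  clear - CA CB CC H4 H5 H6 N1 N2.
  destruct CA as [ -> | [ -> | [ -> | -> ] ] ]; destruct CB as [ -> | [ -> | [ -> | -> ] ] ]; destruct CC as [ -> | [ -> | [ -> | -> ] ] ];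
  try (exfalso; apply (adj_neq _ _ H4); reflexivity);
  try (exfalso; apply (adj_neq _ _ H5); reflexivity);
  try (exfalso; apply (adj_neq _ _ H6); reflexivity);
  try (exfalso; apply N1; assumption); try (exfalso; apply N2; assumption);
  try (left; tperm); try (right; tperm).
Qed.

Lemma sqrt_bound X Y : sqrt (X ^ 2 + Y ^ 2) <= Rabs X + Rabs Y.
Proof.
  rewrite <- (sqrt_square (Rabs X + Rabs Y)) by (pose proof (Rabs_pos X); pose proof (Rabs_pos Y); lra).
  apply sqrt_le_1_alt.
  pose proof (Rabs_pos X); pose proof (Rabs_pos Y).
  replace (X ^ 2) with (Rabs X * Rabs X) by (rewrite <- Rabs_mult; rewrite Rabs_pos_eq by nra; ring).
  replace (Y ^ 2) with (Rabs Y * Rabs Y) by (rewrite <- Rabs_mult; rewrite Rabs_pos_eq by nra; ring).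
  nra.
Qed.

Lemma interior_pt eps I J K p : 0 < eps -> adj I J -> adj I K -> adj J K ->
  tri eps I J K p -> forall r, 0 < r -> exists q, dist2 p q < r /\
  (forall A B C, adj A B -> adj B C -> adj A C -> tri eps A B C q -> tri eps A B C = tri eps I J K).
Proof.
  intros He H1 H2 H3 (s & t & w & Hs & Ht & Hw & Hsum & Ep) r Hr.
  set (a := Lp eps I) in *. set (b := Lp eps J) in *. set (c := Lp eps K) in *.
  set (d := Rabs (fst p - (fst a + fst b + fst c)/3) + Rabs (snd p - (snd a + snd b + snd c)/3)).
  assert (Hd : 0 <= d) by (unfold d; pose proof (Rabs_pos (fst p - (fst a + fst b + fst c)/3));
     pose proof (Rabs_pos (snd p - (snd a + snd b + snd c)/3)); lra).
  set (δ := r / (r + d + 1)).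
  assert (Hδ0 : 0 < δ) by (unfold δ; apply Rdiv_lt_0_compat; lra).
  assert (Hδ1 : δ < 1) by (unfold δ; apply Rmult_lt_reg_r with (r + d + 1); [lra|];
     unfold Rdiv; rewrite Rmult_assoc, Rinv_l by lra; lra).
  set (s' := (1 - δ) * s + δ / 3). set (t' := (1 - δ) * t + δ / 3). set (w' := (1 - δ) * w + δ / 3).
  exists (s' * fst a + t' * fst b + w' * fst c, s' * snd a + t' * snd b + w' * snd c).
  split.
  - unfold dist2. rewrite Ep. cbn [fst snd].
    eapply Rle_lt_trans; [apply sqrt_bound|].
    replace (s * fst a + t * fst b + w * fst c - (s' * fst a + t' * fst b + w' * fst c))
      with (δ * (fst p - (fst a + fst b + fst c)/3)) by (rewrite Ep; simpl; unfold s', t', w'; field).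
    replace (s * snd a + t * snd b + w * snd c - (s' * snd a + t' * snd b + w' * snd c))
      with (δ * (snd p - (snd a + snd b + snd c)/3)) by (rewrite Ep; simpl; unfold s', t', w'; field).
    rewrite !Rabs_mult, (Rabs_pos_eq δ) by lra.
    replace (δ * Rabs (fst p - (fst a + fst b + fst c) / 3) + δ * Rabs (snd p - (snd a + snd b + snd c) / 3))
      with (δ * d) by (unfold d; ring).
    unfold δ. apply Rmult_lt_reg_r with (r + d + 1); [lra|].
    unfold Rdiv. replace (r * / (r + d + 1) * d * (r + d + 1)) with (r * d * ((r + d + 1) * / (r + d + 1))) by ring.
    rewrite Rinv_r by lra. nra.
  - intros A B C H4 H5 H6 HT.
    apply tri_phi in HT as (s0 & t0 & w0 & Hs0 & Ht0 & Hw0 & Hsum0 & E).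
    unfold a, b, c in E. rewrite !Lp_phi, combo_phi in E.
    apply phi_inj in E as [E1 E2]; auto.
    assert (Hsum' : s' + t' + w' = 1) by (unfold s', t', w'; replace w with (1 - s - t) by lra; field).
    assert (Ps : 0 < s') by (unfold s'; nra). assert (Pt : 0 < t') by (unfold t'; nra).
    assert (Pw : 0 < w') by (unfold w'; nra).
    pose proof (rJ_combo I J K I J K s' t' w' Hsum') as RJ1.
    pose proof (rK_combo I J K I J K s' t' w' Hsum') as RK1.
    pose proof (zI_combo I J K I J K s' t' w' Hsum') as RI1.
    rewrite E1, E2 in RJ1, RK1, RI1.
    rewrite rJ_combo in RJ1 by auto. rewrite rK_combo in RK1 by auto.
    rewrite zI_combo in RI1 by auto.
    unfold zI in RI1 at 4 5 6.
    rewrite zJ_I, zJ_J, zJ_K in RJ1, RI1 by auto. rewrite zK_I, zK_J, zK_K in RK1, RI1 by auto.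
    simpl in RJ1, RK1, RI1.
    pose proof (zJ_step I J K H1 H2 H3 _ _ H4). pose proof (zJ_step I J K H1 H2 H3 _ _ H5).
    pose proof (zJ_step I J K H1 H2 H3 _ _ H6).
    pose proof (zK_step I J K H1 H2 H3 _ _ H4). pose proof (zK_step I J K H1 H2 H3 _ _ H5).
    pose proof (zK_step I J K H1 H2 H3 _ _ H6).
    pose proof (zI_step I J K H1 H2 H3 _ _ H4). pose proof (zI_step I J K H1 H2 H3 _ _ H5).
    pose proof (zI_step I J K H1 H2 H3 _ _ H6).
    destruct (range01 (zJ I J K A) (zJ I J K B) (zJ I J K C) s0 t0 w0) as (RA & RB & RC); auto; try lra.
    destruct (range01 (zK I J K A) (zK I J K B) (zK I J K C) s0 t0 w0) as (KA & KB & KC); auto; try lra.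
    destruct (range01 (zI I J K A) (zI I J K B) (zI I J K C) s0 t0 w0) as (SA & SB & SC); auto; try lra.
    pose proof (cand3 I J K H1 H2 H3 A RA KA SA) as CA.
    pose proof (cand3 I J K H1 H2 H3 B RB KB SB) as CB.
    pose proof (cand3 I J K H1 H2 H3 C RC KC SC) as CC.
    clear - CA CB CC H4 H5 H6.
    destruct CA as [ -> | [ -> | -> ] ]; destruct CB as [ -> | [ -> | -> ] ]; destruct CC as [ -> | [ -> | -> ] ];
    try (exfalso; apply (adj_neq _ _ H4); reflexivity);
    try (exfalso; apply (adj_neq _ _ H5); reflexivity);
    try (exfalso; apply (adj_neq _ _ H6); reflexivity);
    tperm.
Qed.



Lemma opp3_invol v : opp3 (opp3 v) = v.
Proof. destruct v as [[x y] z]; simpl; f_equal; [f_equal|]; ring. Qed.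
Lemma opp3_inj a b : opp3 a = opp3 b -> a = b.
Proof. intro H. rewrite <- (opp3_invol a), <- (opp3_invol b), H. reflexivity. Qed.
Lemma opp3_neq v : on_sphere v -> v <> opp3 v.
Proof.
  destruct v as [[x y] z]; simpl; intros H E. injection E; intros. nra.
Qed.

Lemma Nz_norm eps u X Y : Nz eps u X Y -> u (Lp eps X) = opp3 (u (Lp eps Y)).
Proof. intros [H|H]; auto. rewrite H, opp3_invol. reflexivity. Qed.

Lemma nb_sym eps u T T' : neighbours eps u T T' -> neighbours eps u T' T.
Proof.
  intros (H1 & H2 & E & HN & HE). split; auto. split; auto. exists E; split; auto.
  intro p. split; intro Hp; [apply HE; tauto | apply HE in Hp; tauto].
Qed.

Lemma vertex_first X A B C : (X = A \/ X = B \/ X = C) -> adj A B -> adj B C -> adj A C ->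
  forall eps, exists Y Z, tri eps A B C = tri eps X Y Z /\ adj X Y /\ adj Y Z /\ adj X Z.
Proof.
  intros HX H1 H2 H3 eps. destruct HX as [ -> | [ -> | -> ] ].
  - exists B, C; repeat split; first [tperm | assumption | apply adj_sym; assumption].
  - exists A, C; repeat split; first [tperm | assumption | apply adj_sym; assumption].
  - exists A, B; repeat split; first [tperm | assumption | apply adj_sym; assumption].
Qed.

Lemma deg1_gen eps u A B C Y : 0 < eps -> adj A B -> adj B C -> adj A C ->
  ~ Nz eps u A B -> ~ Nz eps u B C -> neighbours eps u (tri eps A B C) Y ->
  Y = tri eps A C (refl3 A C B).
Proof.
  intros He H1 H2 H3 N1 N2 HN.
  destruct (G1 eps u A B C Y He H1 H2 H3 HN) as [[N ->]|[[N ->]|[N ->]]]; auto; contradiction.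
Qed.

Lemma tri_N_contra eps u A B C : (forall X, on_sphere (u (Lp eps X))) ->
  Nz eps u A B -> Nz eps u B C -> Nz eps u A C -> False.
Proof.
  intros Hs N1 N2 N3. apply Nz_norm in N1. apply Nz_norm in N2. apply Nz_norm in N3.
  rewrite N2, opp3_invol in N1. rewrite N1 in N3. apply (opp3_neq _ (Hs C) N3).
Qed.

Lemma deg2_all eps u (Hs : forall X, on_sphere (u (Lp eps X))) V Y1 Y2 Y3 : 0 < eps ->
  neighbours eps u V Y1 -> neighbours eps u V Y2 -> neighbours eps u V Y3 ->
  Y1 = Y2 \/ Y1 = Y3 \/ Y2 = Y3.
Proof.
  intros He N1 N2 N3.
  destruct N1 as [HV HN1]. apply is_tri_inv in HV as (A & B & C & H1 & H2 & H3 & ->); auto.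
  assert (N1 : neighbours eps u (tri eps A B C) Y1) by (split; auto; apply tri_is; auto).
  apply G1 in N1; auto. apply G1 in N2; auto. apply G1 in N3; auto.
  destruct N1 as [[M1 ->]|[[M1 ->]|[M1 ->]]];
  destruct N2 as [[M2 ->]|[[M2 ->]|[M2 ->]]];
  destruct N3 as [[M3 ->]|[[M3 ->]|[M3 ->]]];
  first [left; reflexivity | right; left; reflexivity | right; right; reflexivity
        | exfalso; eapply (tri_N_contra eps u A B C Hs); eauto].
Qed.

Lemma vset eps A B C I J K X : 0 < eps -> adj I J -> adj I K -> adj J K ->
  tri eps A B C = tri eps I J K -> (X = A \/ X = B \/ X = C) -> X = I \/ X = J \/ X = K.
Proof.
  intros He H1 H2 H3 E HX. apply lat_in_tri with eps; auto. rewrite <- E.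
  destruct HX as [ -> | [ -> | -> ] ]; [apply vert1|apply vert2|apply vert3].
Qed.

Lemma first_step {V} (E : V -> V -> Prop) x y : clos_refl_trans V E x y -> x <> y -> exists z, E x z.
Proof.
  intros H Hne. apply clos_rt_rt1n in H. destruct H; [congruence|eauto].
Qed.

Lemma fourth (v1 v2 v3 v4 a b c : Vec3) :
  v1 <> v2 -> v1 <> v3 -> v1 <> v4 -> v2 <> v3 -> v2 <> v4 -> v3 <> v4 ->
  (v1 <> a /\ v1 <> b /\ v1 <> c) \/ (v2 <> a /\ v2 <> b /\ v2 <> c) \/
  (v3 <> a /\ v3 <> b /\ v3 <> c) \/ (v4 <> a /\ v4 <> b /\ v4 <> c).
Proof.
  intros. destruct (classic (v1 = a \/ v1 = b \/ v1 = c)) as [E1|E1]; [|left; tauto].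
  destruct (classic (v2 = a \/ v2 = b \/ v2 = c)) as [E2|E2]; [|right; left; tauto].
  destruct (classic (v3 = a \/ v3 = b \/ v3 = c)) as [E3|E3]; [|right; right; left; tauto].
  destruct (classic (v4 = a \/ v4 = b \/ v4 = c)) as [E4|E4]; [|right; right; right; tauto].
  exfalso.
  destruct E1 as [E1|[E1|E1]]; destruct E2 as [E2|[E2|E2]]; destruct E3 as [E3|[E3|E3]];
  destruct E4 as [E4|[E4|E4]]; subst; congruence.
Qed.



Definition Hal eps u (al : Vec3) (T : Point -> Prop) : Prop :=
  exists A B C, adj A B /\ adj B C /\ adj A C /\ T = tri eps A B C /\
    (u (Lp eps A) = al \/ u (Lp eps A) = opp3 al) /\ u (Lp eps A) = opp3 (u (Lp eps B)).

Lemma Hal_step eps u al X Y : 0 < eps -> Hal eps u al X -> neighbours eps u X Y -> Hal eps u al Y.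
Proof.
  intros He (A & B & C & H1 & H2 & H3 & -> & Ha & Hn) HN.
  destruct (G1 eps u A B C Y He H1 H2 H3 HN) as [[N ->]|[[N ->]|[N ->]]].
  - exists A, B, (refl3 A B C). repeat split; auto.
    + apply adj_refl3_2; auto.
    + apply adj_refl3_1; auto.
  - exists B, C, (refl3 B C A). repeat split; auto.
    + apply adj_refl3_2; apply adj_sym; auto.
    + apply adj_refl3_1; apply adj_sym; auto.
    + assert (u (Lp eps B) = opp3 (u (Lp eps A))) as E by (rewrite Hn, opp3_invol; auto).
      rewrite E. destruct Ha as [-> | ->]; [right|left]; auto. apply opp3_invol.
    + apply Nz_norm; auto.
  - exists A, C, (refl3 A C B). repeat split; auto.
    + apply adj_refl3_2; auto.
    + apply adj_refl3_1; apply adj_sym; auto.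
    + apply Nz_norm; auto.
Qed.

Lemma Hal_reach eps u al X Y : 0 < eps -> clos_refl_trans _ (neighbours eps u) X Y ->
  Hal eps u al X -> Hal eps u al Y.
Proof.
  intros He H. induction H; auto. intro. eapply Hal_step; eauto.
Qed.

Lemma core eps u S I J K :
  0 < eps -> (forall X, on_sphere (u (Lp eps X))) -> pairwise_connected_family eps u S ->
  adj I J -> adj I K -> adj J K ->
  u (Lp eps I) <> u (Lp eps J) -> u (Lp eps I) <> opp3 (u (Lp eps J)) ->
  u (Lp eps K) = opp3 (u (Lp eps I)) ->
  S (tri eps I J K) -> S (tri eps I J (refl3 I J K)) ->
  forall X4 T4, S T4 -> T4 (Lp eps X4) -> u (Lp eps X4) <> u (Lp eps I) ->
  u (Lp eps X4) <> opp3 (u (Lp eps I)) -> u (Lp eps X4) <> u (Lp eps J) -> False.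
Proof.
  intros He Hs [Ftri Fcon] HIJ HIK HJK Hab Hab' HK S1 S2 X4 T4 S4 HX4 N1 N2 N3.
  set (al := u (Lp eps I)) in *.
  set (K' := refl3 I J K) in *.
  assert (HIK' : adj I K') by (apply adj_refl3_1; auto).
  assert (HJK' : adj J K') by (apply adj_refl3_2; auto).
  assert (Hba : u (Lp eps J) <> opp3 al).
  { intro E. apply Hab'. rewrite E, opp3_invol. reflexivity. }
  assert (T12 : tri eps I J K <> tri eps I J K').
  { intro E. assert (tri eps I J K (Lp eps K')) by (rewrite E; apply vert3).
    destruct (lat_in_tri eps I J K K' He HIJ HIK HJK H) as [E'|[E'|E']].
    - apply (adj_neq _ _ HIK'); auto.
    - apply (adj_neq _ _ HJK'); auto.
    - apply (refl3_neq I J K HIJ); auto. }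
  assert (HalT1 : Hal eps u al (tri eps I J K)).
  { exists I, K, J. repeat split; auto; try apply adj_sym; auto.
    - apply tri_swap23.
    - rewrite HK, opp3_invol. reflexivity. }
  assert (HK' : u (Lp eps K') = opp3 al).
  { destruct (Hal_reach eps u al _ _ He (Fcon _ _ S1 S2) HalT1) as (A & B & C & H1 & H2 & H3 & E & Ha & Hn).
    symmetry in E.
    pose proof (vset eps A B C I J K' A He HIJ HIK' HJK' E (or_introl eq_refl)) as VA.
    pose proof (vset eps A B C I J K' B He HIJ HIK' HJK' E (or_intror (or_introl eq_refl))) as VB.
    pose proof (adj_neq _ _ H1) as NAB.
    destruct VA as [ -> | [ -> | -> ] ]; destruct VB as [ -> | [ -> | -> ] ]; try congruence;
      try fold al in Hn; try fold al in Ha.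
    - exfalso. apply Hab'. auto.
    - rewrite Hn, opp3_invol. reflexivity.
    - exfalso. destruct Ha as [Ha|Ha]; [apply Hab; auto | apply Hba; auto].
    - exfalso. destruct Ha as [Ha|Ha]; [apply Hab; auto | apply Hba; auto].
    - exact Hn.
    - exfalso. rewrite Hn in Ha. destruct Ha as [Ha|Ha].
      + apply Hba. rewrite <- Ha, opp3_invol. reflexivity.
      + apply opp3_inj in Ha. apply Hab; auto. }
  assert (D1 : forall Y Z, neighbours eps u (tri eps I J K) Y -> neighbours eps u (tri eps I J K) Z -> Y = Z).
  { assert (NIJ : ~ Nz eps u I J) by (intro N; apply Nz_norm in N; auto).
    assert (NJK : ~ Nz eps u J K).
    { intro N; apply Nz_norm in N. rewrite HK, opp3_invol in N. apply Hab; auto. }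
    intros Y Z HY HZ. rewrite (deg1_gen eps u I J K Y), (deg1_gen eps u I J K Z); auto. }
  assert (D2 : forall Y Z, neighbours eps u (tri eps I J K') Y -> neighbours eps u (tri eps I J K') Z -> Y = Z).
  { assert (NIJ : ~ Nz eps u I J) by (intro N; apply Nz_norm in N; auto).
    assert (NJK : ~ Nz eps u J K').
    { intro N; apply Nz_norm in N. rewrite HK', opp3_invol in N. apply Hab; auto. }
    intros Y Z HY HZ. rewrite (deg1_gen eps u I J K' Y), (deg1_gen eps u I J K' Z); auto. }
  destruct (is_tri_inv eps T4 He (Ftri _ S4)) as (A & B & C & H1 & H2 & H3 & ->).
  pose proof (lat_in_tri eps A B C X4 He H1 H3 H2 HX4) as VX.
  destruct (vertex_first X4 A B C VX H1 H2 H3 eps) as (Y & Z & E4 & HXY & HYZ & HXZ).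
  rewrite E4 in S4, HX4.
  assert (PYZ : (u (Lp eps Y) = al \/ u (Lp eps Y) = opp3 al) /\ (u (Lp eps Z) = al \/ u (Lp eps Z) = opp3 al)).
  { destruct (Hal_reach eps u al _ _ He (Fcon _ _ S1 S4) HalT1) as (A' & B' & C' & H1' & H2' & H3' & E & Ha & Hn).
    symmetry in E.
    pose proof (vset eps A' B' C' X4 Y Z A' He HXY HXZ HYZ E (or_introl eq_refl)) as VA.
    pose proof (vset eps A' B' C' X4 Y Z B' He HXY HXZ HYZ E (or_intror (or_introl eq_refl))) as VB.
    pose proof (adj_neq _ _ H1') as NAB.
    assert (Hb : u (Lp eps B') = al \/ u (Lp eps B') = opp3 al).
    { assert (u (Lp eps B') = opp3 (u (Lp eps A'))) as EB by (rewrite Hn, opp3_invol; auto).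
      rewrite EB. destruct Ha as [-> | ->]; [right|left]; auto. apply opp3_invol. }
    destruct VA as [ -> | [ -> | -> ] ]; destruct VB as [ -> | [ -> | -> ] ]; try congruence;
    try (exfalso; destruct Ha as [Ha|Ha]; auto; fail);
    try (exfalso; destruct Hb as [Hb'|Hb']; auto; fail); split; auto. }
  destruct PYZ as [PY PZ].
  assert (NY : ~ Nz eps u Y X4).
  { intro N. apply Nz_norm in N. assert (u (Lp eps X4) = opp3 (u (Lp eps Y))) as E by (rewrite N, opp3_invol; auto).
    destruct PY as [PY|PY]; rewrite PY in E; [apply N2; auto | rewrite opp3_invol in E; apply N1; auto]. }
  assert (NZ : ~ Nz eps u X4 Z).
  { intro N. apply Nz_norm in N.
    destruct PZ as [PZ|PZ]; rewrite PZ in N; [apply N2; auto | rewrite opp3_invol in N; apply N1; auto]. }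
  assert (D4 : forall Y1 Z1, neighbours eps u (tri eps X4 Y Z) Y1 -> neighbours eps u (tri eps X4 Y Z) Z1 -> Y1 = Z1).
  { rewrite tri_swap12. intros Y1 Z1 HY HZ.
    rewrite (deg1_gen eps u Y X4 Z Y1), (deg1_gen eps u Y X4 Z Z1); auto; apply adj_sym; auto. }
  assert (T41 : tri eps X4 Y Z <> tri eps I J K).
  { intro E. assert (tri eps I J K (Lp eps X4)) by (rewrite <- E; apply vert1).
    destruct (lat_in_tri eps I J K X4 He HIJ HIK HJK H) as [E'|[E'|E']]; subst X4; auto.
  }
  assert (T42 : tri eps X4 Y Z <> tri eps I J K').
  { intro E. assert (tri eps I J K' (Lp eps X4)) by (rewrite <- E; apply vert1).
    destruct (lat_in_tri eps I J K' X4 He HIJ HIK' HJK' H) as [E'|[E'|E']]; subst X4; auto. }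
  destruct (leaves (Point -> Prop) (neighbours eps u) (nb_sym eps u)
     (fun v x y z => deg2_all eps u Hs v x y z He)
     (tri eps I J K) (tri eps I J K') (tri eps X4 Y Z) T12 D1 D2 D4
     (Fcon _ _ S1 S2) (Fcon _ _ S1 S4)) as [E|E]; auto.
Qed.



Lemma tri_ne12 eps I J K : 0 < eps -> adj I J -> adj I K -> adj J K ->
  tri eps I J K <> tri eps I J (refl3 I J K).
Proof.
  intros He HIJ HIK HJK E.
  assert (HIK' : adj I (refl3 I J K)) by (apply adj_refl3_1; auto).
  assert (HJK' : adj J (refl3 I J K)) by (apply adj_refl3_2; auto).
  assert (tri eps I J K (Lp eps (refl3 I J K))) by (rewrite E; apply vert3).
  destruct (lat_in_tri eps I J K _ He HIJ HIK HJK H) as [E'|[E'|E']].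
  - apply (adj_neq _ _ HIK'); auto.
  - apply (adj_neq _ _ HJK'); auto.
  - apply (refl3_neq I J K HIJ); auto.
Qed.

Lemma get4 eps u S (a b c : Vec3) :
  (exists k1 k2 k3 k4 : Point,
      in_lattice eps k1 /\ big_union S k1 /\ in_lattice eps k2 /\ big_union S k2 /\
      in_lattice eps k3 /\ big_union S k3 /\ in_lattice eps k4 /\ big_union S k4 /\
      u k1 <> u k2 /\ u k1 <> u k3 /\ u k1 <> u k4 /\
      u k2 <> u k3 /\ u k2 <> u k4 /\ u k3 <> u k4) ->
  exists X4 T4, S T4 /\ T4 (Lp eps X4) /\ u (Lp eps X4) <> a /\ u (Lp eps X4) <> b /\ u (Lp eps X4) <> c.
Proof.
  intros (k1 & k2 & k3 & k4 & L1 & U1 & L2 & U2 & L3 & U3 & L4 & U4 & D12 & D13 & D14 & D23 & D24 & D34).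
  destruct (fourth (u k1) (u k2) (u k3) (u k4) a b c D12 D13 D14 D23 D24 D34) as [F|[F|[F|F]]].
  - apply in_lattice_Lp in L1 as [X ->]. destruct U1 as (T & ST & HT). exists X, T; tauto.
  - apply in_lattice_Lp in L2 as [X ->]. destruct U2 as (T & ST & HT). exists X, T; tauto.
  - apply in_lattice_Lp in L3 as [X ->]. destruct U3 as (T & ST & HT). exists X, T; tauto.
  - apply in_lattice_Lp in L4 as [X ->]. destruct U4 as (T & ST & HT). exists X, T; tauto.
Qed.

Lemma not_S2 eps u S I J Kx :
  0 < eps -> (forall X, on_sphere (u (Lp eps X))) -> pairwise_connected_family eps u S ->
  adj I J -> adj I Kx -> adj J Kx ->
  u (Lp eps I) <> u (Lp eps J) -> u (Lp eps I) <> opp3 (u (Lp eps J)) ->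
  (exists k1 k2 k3 k4 : Point,
      in_lattice eps k1 /\ big_union S k1 /\ in_lattice eps k2 /\ big_union S k2 /\
      in_lattice eps k3 /\ big_union S k3 /\ in_lattice eps k4 /\ big_union S k4 /\
      u k1 <> u k2 /\ u k1 <> u k3 /\ u k1 <> u k4 /\
      u k2 <> u k3 /\ u k2 <> u k4 /\ u k3 <> u k4) ->
  S (tri eps I J Kx) -> ~ S (tri eps I J (refl3 I J Kx)).
Proof.
  intros He Hs Hfam HIJ HIK HJK Hab Hab' Hk S1 S2.
  pose proof Hfam as [Ftri Fcon].
  destruct (first_step _ _ _ (Fcon _ _ S1 S2) (tri_ne12 eps I J Kx He HIJ HIK HJK)) as [Y HY].
  destruct (G1 eps u I J Kx Y He HIJ HJK HIK HY) as [[N _]|[[N _]|[N _]]].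
  - apply Nz_norm in N. auto.
  - apply Nz_norm in N.
    assert (EK : u (Lp eps Kx) = opp3 (u (Lp eps J))) by (rewrite N, opp3_invol; auto).
    destruct (get4 eps u S (u (Lp eps J)) (opp3 (u (Lp eps J))) (u (Lp eps I)) Hk)
      as (X4 & T4 & S4 & H4 & N1 & N2 & N3).
    refine (core eps u S J I Kx He Hs Hfam (adj_sym _ _ HIJ) HJK HIK _ _ EK _ _ X4 T4 S4 H4 N1 N2 N3).
    + auto.
    + intro E. apply Hab'. rewrite E, opp3_invol. auto.
    + rewrite tri_swap12. auto.
    + rewrite refl3_comm, tri_swap12. auto.
  - apply Nz_norm in N.
    assert (EK : u (Lp eps Kx) = opp3 (u (Lp eps I))) by (rewrite N, opp3_invol; auto).
    destruct (get4 eps u S (u (Lp eps I)) (opp3 (u (Lp eps I))) (u (Lp eps J)) Hk)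
      as (X4 & T4 & S4 & H4 & N1 & N2 & N3).
    apply (core eps u S I J Kx He Hs Hfam HIJ HIK HJK Hab Hab' EK S1 S2 X4 T4 S4 H4 N1 N2 N3).
Qed.


Lemma final_K eps u S I J Kx :
  0 < eps -> (forall X, on_sphere (u (Lp eps X))) -> pairwise_connected_family eps u S ->
  adj I J -> adj I Kx -> adj J Kx ->
  u (Lp eps I) <> u (Lp eps J) -> u (Lp eps I) <> opp3 (u (Lp eps J)) ->
  (exists k1 k2 k3 k4 : Point,
      in_lattice eps k1 /\ big_union S k1 /\ in_lattice eps k2 /\ big_union S k2 /\
      in_lattice eps k3 /\ big_union S k3 /\ in_lattice eps k4 /\ big_union S k4 /\
      u k1 <> u k2 /\ u k1 <> u k3 /\ u k1 <> u k4 /\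
      u k2 <> u k3 /\ u k2 <> u k4 /\ u k3 <> u k4) ->
  S (tri eps I J Kx) -> boundary_edge eps u (big_union S) (segment (Lp eps I) (Lp eps J)).
Proof.
  intros He Hs Hfam HIJ HIK HJK Hab Hab' Hk S1.
  pose proof (not_S2 eps u S I J Kx He Hs Hfam HIJ HIK HJK Hab Hab' Hk S1) as NS2.
  pose proof Hfam as [Ftri Fcon].
  assert (HIK' : adj I (refl3 I J Kx)) by (apply adj_refl3_1; auto).
  assert (HJK' : adj J (refl3 I J Kx)) by (apply adj_refl3_2; auto).
  split.
  - split.
    + exists (Lp eps I), (Lp eps J). repeat split; try apply Lp_in_lattice; try apply adj_dist; auto.
    + intros (i' & j' & Hi' & Hj' & Hd' & Heq & Hu).
      apply in_lattice_Lp in Hi' as [P ->]. apply in_lattice_Lp in Hj' as [Q ->].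
      apply dist_adj in Hd'; auto.
      assert (HP : P = I \/ P = J) by (apply lat_in_seg with eps; auto; apply Heq, seg_l).
      assert (HQ : Q = I \/ Q = J) by (apply lat_in_seg with eps; auto; apply Heq, seg_r).
      pose proof (adj_neq _ _ Hd').
      destruct HP as [ -> | -> ]; destruct HQ as [ -> | -> ]; try congruence.
      apply Hab'. rewrite Hu, opp3_invol. auto.
  - exists (tri eps I J Kx), (tri eps I J (refl3 I J Kx)).
    split; [apply tri_is; auto|]. split; [apply tri_is; auto|].
    split; [intros p Hp; exists (tri eps I J Kx); auto|].
    split.
    + intros p Hp (r & Hr & Hball).
      destruct (interior_pt eps I J (refl3 I J Kx) p He HIJ HIK' HJK' Hp r Hr) as (q & Hq & Hprop).
      destruct (Hball q Hq) as (T & ST & Tq).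
      destruct (is_tri_inv eps T He (Ftri _ ST)) as (A & B & C & H1 & H2 & H3 & ->).
      apply NS2. rewrite <- (Hprop A B C H1 H2 H3 Tq). auto.
    + apply inter_seg; auto.
Qed.

Theorem lemma5p5 (eps : R) (Omega : Point -> Prop) (u : Point -> Vec3)
  (Rg : Point -> Prop) (i j : Point) :
  0 < eps -> is_open Omega -> is_bounded Omega -> SF eps Omega u ->
  admissible_region eps u Rg ->
  (exists k1 k2 k3 k4 : Point,
      in_lattice eps k1 /\ Rg k1 /\ in_lattice eps k2 /\ Rg k2 /\
      in_lattice eps k3 /\ Rg k3 /\ in_lattice eps k4 /\ Rg k4 /\
      u k1 <> u k2 /\ u k1 <> u k3 /\ u k1 <> u k4 /\
      u k2 <> u k3 /\ u k2 <> u k4 /\ u k3 <> u k4) ->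
  in_lattice eps i -> in_lattice eps j -> dist2 i j = eps ->
  subset (segment i j) Rg ->
  u i <> u j -> u i <> opp3 (u j) ->
  boundary_edge eps u Rg (segment i j).
Proof.
  intros He _ _ Hsf (S & Hfam & HRg & _) Hk Hi Hj Hd Hseg Hab Hab'.
  apply set_ext in HRg. subst Rg.
  assert (Hs : forall X, on_sphere (u (Lp eps X))) by (intro X; apply (Hsf _ (Lp_in_lattice eps X))).
  apply in_lattice_Lp in Hi as [I ->]. apply in_lattice_Lp in Hj as [J ->].
  apply dist_adj in Hd; auto.
  set (K := rot I J).
  assert (HIK : adj I K) by (apply adj_rot1; auto).
  assert (HJK : adj J K) by (apply adj_rot2; auto).
  assert (Hm : big_union S ((1 - /2) * fst (Lp eps I) + /2 * fst (Lp eps J),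
                 (1 - /2) * snd (Lp eps I) + /2 * snd (Lp eps J))).
  { apply Hseg. exists (/2). split; [lra|]. reflexivity. }
  destruct Hm as (T & ST & Tm).
  pose proof Hfam as [Ftri Fcon].
  destruct (is_tri_inv eps T He (Ftri _ ST)) as (A & B & C & H1 & H2 & H3 & ->).
  destruct (mid_tri eps I J K A B C He Hd HIK HJK H1 H2 H3 Tm) as [E|E]; rewrite E in ST.
  - apply (final_K eps u S I J K); auto.
  - apply (final_K eps u S I J (refl3 I J K)); auto.
    + apply adj_refl3_1; auto.
    + apply adj_refl3_2; auto.
Qed.
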